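(* Let $\Gamma$ and $\Sigma$ be sets of clauses (with designated blocking variables). Any cost-SR calculus derivation $D_1,\dots,D_t$ from $\Gamma$ (with its witnessing substitutions) is also a valid cost-SR calculus derivation from $\Gamma\cup\Sigma$, provided either (1) the variables of $\Sigma$ do not occur in $\Gamma\cup\{D_1,\dots,D_t\}$, or (2) for every clause $C\in\Sigma$ there is a clause $C'\in\Gamma$ with $C'\subseteq C$.
   Context: Substitutions map variables to $0$, $1$ or literals ($\sigma(\lnot x)=\lnot\sigma(x)$); $(\sigma\circ\tau)(x)=\sigma(\tau(x))$; total assignments assign all variables. $C{\upharpoonright}_\sigma$: apply $\sigma$ to the literals and simplify; $\Gamma{\upharpoonright}_\sigma$ is the multiset of $C{\upharpoonright}_\sigma\ne1$, $C\in\Gamma$. $\lnot C$ is the partial assignment falsifying all literals of $C$. $\Gamma\vdash_1 C$ means unit propagation on $\Gamma{\upharpoonright}_{\lnot C}$ derives the empty clause; $\Gamma\vdash_1\Delta$ means this for all $D\in\Delta$. $\mathrm{cost}(\alpha)=\sum_i\alpha(b_i)$ over blocking variables $b_i$. $C$ is cost-SR w.r.t. $\Gamma$ via $\sigma$ if (1) $\Gamma{\upharpoonright}_{\lnot C}\vdash_1(\Gamma\cup\{C\}){\upharpoonright}_\sigma$ and (2) $\mathrm{cost}(\tau\circ\sigma)\le\mathrm{cost}(\tau)$ for all total $\tau\supseteq\lnot C$. A cost-SR calculus derivation from $\Gamma$: sequence $D_1,\dots,D_t$, each in $\Gamma$, or by weakening (from $A$ infer $B\supseteq A$) or resolution from earlier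 clauses, or cost-SR (with an attached witness) w.r.t. $\Gamma\cup\{D_1,\dots,D_{i-1}\}$ with $\mathrm{Var}(D_i)\subseteq\mathrm{Var}(\Gamma)$. *)

(* Defs.v *)
From mathcomp Require Import all_boot.
Set Implicit Arguments. Unset Strict Implicit. Unset Printing Implicit Defensive.

(** Variables are natural numbers; a literal is (x, true) = x or (x, false) = ~x. *)
Definition var := nat.
Definition lit := (var * bool)%type.
Definition negl (l : lit) : lit := (l.1, ~~ l.2).
(** A clause is a finite set of literals, represented by a sequence
    (membership/inclusion is what matters); a formula is a multiset of clauses. *)
Definition clause := seq lit.
Definition formula := seq clause.

Inductive val := VC of bool | VL of lit.
Definition subst := var -> val.
Definition negv (v : val) : val :=
  match v with VC b => VC (~~ b) | VL l => VL (negl l) end.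
Definition lsub (s : subst) (l : lit) : val :=
  if l.2 then s l.1 else negv (s l.1).

(** C|_sigma : None stands for the constant 1 (satisfied clause); otherwise the
    clause of the non-constant images (literals mapped to 0 are removed).
    Simplification also turns a clause containing complementary literals
    (a tautology) into 1. *)
Definition crestr (s : subst) (C : clause) : option clause :=
  let vs := map (lsub s) C in
  if has (fun v => if v is VC true then true else false) vs then None else
  let ls := pmap (fun v => if v is VL l then Some l else None) vs in
  if has (fun l => negl l \in ls) ls then None else Some ls.

Definition frestr (s : subst) (F : formula) : formula := pmap (crestr s) F.

(** ~C : the partial assignment falsifying all literals of C
    (as a substitution; unassigned variables are mapped to themselves). *)
Definition negC (C : clause) : subst := fun x =>
  if (x, true) \in C then VC false
  else if (x, false) \in C then VC true
  else VL (x, true).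

Inductive UPref : formula -> Prop :=
| UP_empty F : [::] \in F -> UPref F
| UP_unit F (l : lit) :
    (exists2 D, D \in F & (D != [::]) && all (fun l' => l' == l) D) ->
    UPref (frestr (negC [:: negl l]) F) -> UPref F.

Definition entails1 (F : formula) (C : clause) : Prop :=
  UPref (frestr (negC C) F).

Definition assignment := var -> bool.
Definition cost (blk : seq var) (a : assignment) : nat := \sum_(b <- blk) a b.
Definition comp_as (t : assignment) (s : subst) : assignment := fun x =>
  match s x with VC b => b | VL l => if l.2 then t l.1 else ~~ t l.1 end.
Definition extends_negC (t : assignment) (C : clause) : Prop :=
  forall l, l \in C -> t l.1 = ~~ l.2.

Definition costSR (blk : seq var) (F : formula) (C : clause) (s : subst) : Prop :=
  (forall D, D \in frestr s (C :: F) -> entails1 (frestr (negC C) F) D) /\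
  (forall t : assignment, extends_negC t C -> cost blk (comp_as t s) <= cost blk t).

Definition occurs (x : var) (F : formula) : bool := has (fun C => x \in map fst C) F.
Definition varsC (C : clause) : seq var := map fst C.

Definition resolvent (A B R : clause) : Prop :=
  exists x : var, [/\ (x, true) \in A, (x, false) \in B &
    forall l, (l \in R) = ((l \in A) && (l != (x, true))) || ((l \in B) && (l != (x, false)))].

(** Justification of a derivation step (indices refer to earlier lines, 0-based). *)
Inductive rule := RAx | RWeak of nat | RRes of nat & nat | RSR of subst.

(** For cost-SR the witness is a substitution
    over the variables of the current formula: it is the identity outside
    Var(G, prev, D). *)
Definition valid_step (blk : seq var) (G : formula) (prev : seq clause)
  (D : clause) (r : rule) : Prop :=
  match r with
  | RAx => D \in G
  | RWeak j => j < size prev /\ {subset nth [::] prev j <= D}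
  | RRes j k => [/\ j < size prev, k < size prev &
                   resolvent (nth [::] prev j) (nth [::] prev k) D]
  | RSR s => [/\ costSR blk (G ++ prev) D s,
                 (forall x, x \in varsC D -> occurs x G) &
                 forall x, ~~ occurs x (D :: G ++ prev) -> s x = VL (x, true)]
  end.

Definition valid_deriv (blk : seq var) (G : formula) (pi : seq (clause * rule)) : Prop :=
  forall i, i < size pi ->
    valid_step blk G (map fst (take i pi)) (nth ([::], RAx) pi i).1 (nth ([::], RAx) pi i).2.

(* Main.v *)
Require Import Defs.
From mathcomp Require Import all_boot.
Set Implicit Arguments. Unset Strict Implicit. Unset Printing Implicit Defensive.

Definition PA (s : subst) := forall x, s x = VL (x, true) \/ exists b, s x = VC b.
Definition assigned (s : subst) (l : lit) : bool := if s l.1 is VC _ then true else false.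
Definition satl (s : subst) (l : lit) : bool := if lsub s l is VC true then true else false.
Definition ovr (s1 s2 : subst) : subst := fun x => if s2 x is VC b then VC b else s1 x.
Definition idS : subst := fun x => VL (x, true).

Lemma lsub_PA s l : PA s ->
  lsub s l = if s l.1 is VC b then VC (if l.2 then b else ~~ b) else VL l.
Proof.
case: l => x b H; rewrite /lsub /=; case: (H x) => [->|[c ->]]; by case: b.
Qed.

Lemma crestr_PA s E : PA s ->
  crestr s E = let R := [seq l <- E | ~~ assigned s l] in
    if has (satl s) E || has (fun l => negl l \in R) R then None else Some R.
Proof.
move=> H /=; rewrite /crestr has_map.
have -> : pmap (fun v => if v is VL l then Some l else None) (map (lsub s) E)
   = [seq l <- E | ~~ assigned s l].
  elim: E => //= l E IH; rewrite lsub_PA // /assigned.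
  by case: (s l.1) => [b|l'] /=; rewrite IH.
by case: has.
Qed.

Lemma PA_ovr s1 s2 : PA s1 -> PA s2 -> PA (ovr s1 s2).
Proof. move=> H1 H2 x; rewrite /ovr; case: (H2 x) => [->|[b ->]]; eauto. Qed.

Lemma PA_idS : PA idS. Proof. by left. Qed.

Lemma PA_negC C : PA (negC C).
Proof. move=> x; rewrite /negC; case: ifP => _; [|case: ifP => _]; eauto. Qed.

Lemma assigned_negl s l : assigned s (negl l) = assigned s l.
Proof. by []. Qed.

Lemma sat_assigned s l : PA s -> assigned s l -> satl s l || satl s (negl l).
Proof.
move=> H; rewrite /satl /assigned !lsub_PA //=.
case: (s l.1) => // b _; by case: l.2; case: b.
Qed.

Lemma unassigned_nsat s l : PA s -> ~~ assigned s l -> ~~ satl s l.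
Proof. move=> H; rewrite /satl /assigned lsub_PA //; by case: (s l.1). Qed.

Lemma crestr_comp s1 s2 E : PA s1 -> PA s2 ->
  obind (crestr s1) (crestr s2 E) = crestr (ovr s1 s2) E.
Proof.
move=> H1 H2; have H12 := PA_ovr H1 H2.
rewrite !crestr_PA //=.
have asU : forall l, assigned (ovr s1 s2) l = assigned s2 l || assigned s1 l.
  by move=> l; rewrite /assigned /ovr; case: (s2 l.1).
have satU : forall l, satl (ovr s1 s2) l = satl s2 l || ~~ assigned s2 l && satl s1 l.
  move=> l; rewrite /satl /assigned !lsub_PA //= /ovr.
  case: (s2 l.1) => [b|l'] /=; rewrite ?orbF //; case: (s1 l.1) => //.
have RR : [seq l <- [seq l <- E | ~~ assigned s2 l] | ~~ assigned s1 l]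
        = [seq l <- E | ~~ assigned (ovr s1 s2) l].
  rewrite -filter_predI; apply: eq_filter => y /=; by rewrite asU negb_or andbC.
set R2 := [seq l <- E | ~~ assigned s2 l].
set R := [seq l <- E | ~~ assigned (ovr s1 s2) l].
have hsU : has (satl (ovr s1 s2)) E = has (satl s2) E || has (satl s1) R2.
  rewrite /R2; elim: (E) => //= y E' ->; rewrite satU.
  have := @unassigned_nsat s2 y H2; case: (assigned s2 y) => /=; case: (satl s2 y); case: (satl s1 y) => /=; rewrite ?orbT ?orbF //.
case h2: (has (satl s2) E) => /=.
  by rewrite hsU h2.
rewrite hsU h2 /=.
case p2: (has (fun l => negl l \in R2) R2) => /=; last rewrite crestr_PA //= RR.
  case h1: (has (satl s1) R2) => //=.
  case/hasP: p2 => l lR nlR.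
  case a1: (assigned s1 l).
    case/orP: (sat_assigned H1 a1) => hs; move/hasPn: (negbT h1) => HH.
      by move: (HH l lR); rewrite hs.
    by move: (HH _ nlR); rewrite hs.
  have lR' : l \in R by move: lR; rewrite /R /R2 !mem_filter asU a1 orbF.
  have nlR' : negl l \in R.
    by move: nlR; rewrite /R /R2 !mem_filter asU !assigned_negl a1 orbF.
  have -> // : has (fun l => negl l \in R) R by apply/hasP; exists l.
by [].
Qed.

Lemma crestr_ext s s' E : {in E, forall l, s l.1 = s' l.1} -> crestr s E = crestr s' E.
Proof.
move=> H; rewrite /crestr; have -> // : map (lsub s) E = map (lsub s') E.
by apply/eq_in_map => l lE; rewrite /lsub H.
Qed.

Lemma frestr_ext s s' F : (forall x, s x = s' x) -> frestr s F = frestr s' F.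
Proof. move=> H; apply: eq_pmap => E; apply: crestr_ext => l _; exact: H. Qed.

Lemma frestr_comp s1 s2 F : PA s1 -> PA s2 ->
  frestr s1 (frestr s2 F) = frestr (ovr s1 s2) F.
Proof.
move=> H1 H2; rewrite /frestr; elim: F => //= E F IH.
rewrite -crestr_comp //; case: (crestr s2 E) => [R|] /=; last by [].
by case: (crestr s1 R) => [R'|] /=; rewrite IH.
Qed.

Lemma mem_frestr s F R : R \in frestr s F <-> exists2 E, E \in F & crestr s E = Some R.
Proof.
rewrite /frestr mem_pmap; split.
  by case/mapP => E EF e; exists E.
by case=> E EF e; apply/mapP; exists E; rewrite ?e.
Qed.

Lemma frestr_sub s F F' : {subset F <= F'} -> {subset frestr s F <= frestr s F'}.
Proof.
move=> sub R /mem_frestr [E EF e]; apply/mem_frestr; exists E => //; exact: sub.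
Qed.

Lemma pmap_map' (A B : Type) (C : Type) (f : B -> option C) (h : A -> B) s :
  pmap f (map h s) = pmap (fun x => f (h x)) s.
Proof. by elim: s => //= x s ->. Qed.

Lemma crestr_sub s E E' R : {subset E' <= E} -> crestr s E = Some R ->
  exists2 R', crestr s E' = Some R' & {subset R' <= R}.
Proof.
move=> sub; rewrite /crestr.
set g := (fun v => if v is VL l then Some l else None).
rewrite !has_map.
case h: (has _ E) => //.
have -> : has (preim (lsub s) (fun v => if v is VC true then true else false)) E' = false.
  apply: negbTE; apply/hasPn => l lE'; move/hasPn: (negbT h) => H.
  by apply: H; apply: sub.
have sub2 : {subset pmap g (map (lsub s) E') <= pmap g (map (lsub s) E)}.
  move=> l; rewrite !pmap_map' !mem_pmap => /mapP [y yE' e].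
  by apply/mapP; exists y => //; apply: sub.
case h2: (has _ (pmap g (map (lsub s) E))) => // -[<-].
exists (pmap g (map (lsub s) E')) => //.
case h3: has => //; case/hasP: h3 => l lR nl.
move/hasPn: (negbT h2) => H; move: (H l (sub2 _ lR)).
by rewrite (sub2 _ nl).
Qed.

Definition dom (F F' : formula) :=
  forall E, E \in F -> exists2 E', E' \in F' & {subset E' <= E}.

Lemma UP_dom F F' : UPref F -> dom F F' -> UPref F'.
Proof.
move=> H; elim: H F' => {F}.
  move=> F Fe F' d; case: (d _ Fe) => E' E'F sub.
  have e : E' = [::] by case: E' E'F sub => // l E' _ sub; have := sub l (mem_head _ _).
  by apply: UP_empty; rewrite -e.
move=> F l [D DF Dun] _ IH F' d; case: (d D DF) => E' E'F sub.
case: E' E'F sub => [|l0 E'] E'F sub; first exact: UP_empty.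
apply: (UP_unit (l := l)).
  exists (l0 :: E') => //; apply/andP; split => //; apply/allP => l' /sub l'D.
  by move/andP: Dun => [_ /allP]; apply.
apply: IH => R /mem_frestr [E EF e]; case: (d E EF) => E2 E2F sub2.
case: (crestr_sub sub2 e) => R' e' sub'; exists R' => //.
by apply/mem_frestr; exists E2.
Qed.

Lemma UP_sub F F' : UPref F -> {subset F <= F'} -> UPref F'.
Proof. by move=> H sub; apply: (UP_dom H) => E EF; exists E => //; apply: sub. Qed.

Lemma negC_unit (l : lit) : negC [:: negl l] l.1 = VC l.2.
Proof. case: l => x [] /=; by rewrite /negC /negl /= !mem_seq1 !xpair_eqE eqxx. Qed.

Lemma negC_unit_other (l : lit) y : y != l.1 -> negC [:: negl l] y = VL (y, true).
Proof.
case: l => x b /= ne; rewrite /negC /negl !inE /=.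
by rewrite !xpair_eqE (negbTE ne).
Qed.

Lemma UP_restr F s : UPref F -> PA s -> UPref (frestr s F).
Proof.
move=> H; elim: H s => {F}.
  move=> F Fe s Hs; apply: UP_empty; apply/mem_frestr; by exists [::].
move=> F l [D DF Dun] _ IH s Hs.
set u := negC [:: negl l].
have Hu : PA u by exact: PA_negC.
move/andP: Dun => [Dne /allP Dall].
have Dl : forall y, y \in D -> y = l by move=> y /Dall /eqP.
case: (Hs l.1) => [sl|[b sl]].
  have eD : crestr s D = Some D.
    rewrite crestr_PA //=.
    have -> : [seq y <- D | ~~ assigned s y] = D.
      apply/all_filterP/allP => y /Dl ->; by rewrite /assigned sl.
    have -> : has (satl s) D = false.
      apply/negbTE/hasPn => y /Dl ->; apply: unassigned_nsat => //; by rewrite /assigned sl.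
    have -> // : has (fun y => negl y \in D) D = false.
    apply/negbTE/hasPn => y /Dl -> ; apply/negP => /Dl.
    by move/(congr1 snd); rewrite /negl /=; case: (l.2).
  apply: (UP_unit (l := l)).
    by exists D; [apply/mem_frestr; exists D | rewrite Dne; apply/allP].
  rewrite frestr_comp //.
  have := IH s Hs; rewrite frestr_comp //.
  rewrite (frestr_ext F (s' := ovr u s)) // => x.
  rewrite /ovr; case: (eqVneq x l.1) => [->|ne].
    by rewrite sl /u negC_unit.
  rewrite /u negC_unit_other //; by case: (Hs x) => [->|[c ->]].
case ev: (if l.2 then b else ~~ b).
  have := IH s Hs; rewrite frestr_comp //.
  rewrite (frestr_ext F (s' := s)) // => x.
  rewrite /ovr; case: (eqVneq x l.1) => [->|ne].
    by rewrite /u negC_unit sl; clear sl; move: ev; case: (l.2); case: b.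
  by rewrite /u negC_unit_other.
apply: UP_empty; apply/mem_frestr; exists D => //.
rewrite crestr_PA //=.
have -> : [seq y <- D | ~~ assigned s y] = [::].
  apply/eqP; rewrite -[_ == _]negbK -has_filter; apply/hasPn => y /Dl ->.
  by rewrite /assigned sl.
have -> // : has (satl s) D = false.
apply/negbTE/hasPn => y /Dl ->; by rewrite /satl lsub_PA // sl ev.
Qed.

Lemma occurs_sub x F F' : {subset F <= F'} -> occurs x F -> occurs x F'.
Proof. by move=> sub /hasP [C CF h]; apply/hasP; exists C => //; apply: sub. Qed.

Lemma crestr_ntaut s E R : crestr s E = Some R -> forall l, l \in R -> negl l \notin R.
Proof.
rewrite /crestr; case: ifP => // _; case: ifP => // h [<-] l lR.
by move/hasPn: (negbT h) => H; exact: H l lR.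
Qed.

Lemma negC_ovr R R' : {subset R' <= R} -> (forall l, l \in R -> negl l \notin R) ->
  forall x, ovr (negC R) (negC R') x = negC R x.
Proof.
move=> sub nt x; rewrite /ovr /negC.
case: ifP => [/sub -> //|h1].
case: ifP => [h2|h2 //].
have h2' := sub _ h2.
case: ifP => [h3|_]; last by rewrite h2'.
by move: (nt _ h3); rewrite /negl /= h2'.
Qed.

Lemma sr_step blk G S prev D s :
  costSR blk (G ++ prev) D s ->
  (forall x, ~~ occurs x (D :: G ++ prev) -> s x = VL (x, true)) ->
  ((forall x, occurs x S -> ~~ occurs x (D :: G ++ prev)) \/
   (forall C, C \in S -> exists2 C', C' \in G & {subset C' <= C})) ->
  costSR blk ((G ++ S) ++ prev) D s.
Proof.
move=> [H1 H2] Hid Hc; split => // R /mem_frestr [E EF' e].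
have sub : {subset G ++ prev <= (G ++ S) ++ prev}.
  by move=> c; rewrite !mem_cat => /orP [->|->]; rewrite ?orbT.
have subX : forall s1 s2, {subset frestr s1 (frestr s2 (G ++ prev)) <=
                              frestr s1 (frestr s2 ((G ++ S) ++ prev))}.
  by move=> s1 s2; apply: frestr_sub; apply: frestr_sub.
have old : E \in D :: G ++ prev -> UPref (frestr (negC R) (frestr (negC D) ((G ++ S) ++ prev))).
  move=> EF; have : R \in frestr s (D :: G ++ prev) by apply/mem_frestr; exists E.
  move/H1; rewrite /entails1 => UP; exact: (UP_sub UP (subX _ _)).
move: EF'; rewrite inE !mem_cat -!orbA => /or4P [ED|EG|ES|EP].
- by apply: old; rewrite inE ED.
- by apply: old; rewrite inE mem_cat EG orbT.
- rewrite /entails1; case: Hc => [Hc|Hc].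
  + have nocc : forall l, l \in E -> ~~ occurs l.1 (D :: G ++ prev).
      by move=> l lE; apply: Hc; apply/hasP; exists E => //; apply: map_f.
    have e1 : crestr s E = crestr idS E.
      by apply: crestr_ext => l lE; apply: Hid; apply: nocc.
    have nD : forall l, l \in E -> negC D l.1 = VL (l.1, true).
      move=> l lE; have := nocc l lE; rewrite /occurs /= negb_or => /andP [h _].
      rewrite /negC; case: ifP => [hh|_]; first by move: h; rewrite (map_f fst hh).
      case: ifP => [hh|//]; by move: h; rewrite (map_f fst hh).
    have e2 : crestr (negC D) E = crestr idS E.
      by apply: crestr_ext => l lE; apply: nD.
    have eid : crestr idS E = if has (fun l => negl l \in E) E then None else Some E.
      rewrite crestr_PA; last exact: PA_idS.
      have -> : [seq l <- E | ~~ assigned idS l] = E by apply/all_filterP/allP.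
      have -> // : has (satl idS) E = false.
      by apply/negbTE/hasPn => l _; apply: unassigned_nsat; [exact: PA_idS|].
    move: e; rewrite e1 eid; case: ifP => // nt [eR]; subst R.
    apply: UP_empty; apply/mem_frestr; exists E.
      apply/mem_frestr; exists E; first by rewrite !mem_cat ES orbT.
      by rewrite e2 eid nt.
    rewrite crestr_PA; last exact: PA_negC.
    have ntE : forall l, l \in E -> negl l \notin E.
      by move=> l lE; apply/negP => nl; move/negbT/hasPn: nt => H; move: (H l lE); rewrite nl.
    have val : forall l, l \in E -> negC E l.1 = VC (~~ l.2).
      case=> x b lE; rewrite /negC /=; case: b lE => lE; first by rewrite lE.
      case: ifP => [h|_]; last by rewrite lE.
      by move: (ntE _ h); rewrite /negl /= lE.
    have -> : [seq l <- E | ~~ assigned (negC E) l] = [::].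
      apply/eqP; rewrite -[_ == _]negbK -has_filter; apply/hasPn => l lE.
      by rewrite /assigned val.
    have -> // : has (satl (negC E)) E = false.
    apply/negbTE/hasPn => l lE; rewrite /satl /lsub val //.
    by case: (l.2).
  + case: (Hc E ES) => C' C'G sub'.
    case: (crestr_sub sub' e) => R' e' subR.
    have : R' \in frestr s (D :: G ++ prev).
      by apply/mem_frestr; exists C' => //; rewrite inE mem_cat C'G orbT.
    move/H1; rewrite /entails1 => UP.
    have UP2 := UP_restr UP (PA_negC R).
    rewrite frestr_comp in UP2; [|exact: PA_negC|exact: PA_negC].
    rewrite (frestr_ext _ (negC_ovr subR (crestr_ntaut e))) in UP2.
    exact: (UP_sub UP2 (subX _ _)).
- by apply: old; rewrite inE mem_cat EP !orbT.
Qed.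

Theorem lemma6p4 (blk : seq var) (G S : formula) (pi : seq (clause * rule)) :
  valid_deriv blk G pi ->
  ((forall x, occurs x S -> ~~ occurs x (G ++ map fst pi)) \/
   (forall C, C \in S -> exists2 C', C' \in G & {subset C' <= C})) ->
  valid_deriv blk (G ++ S) pi.
Proof.
move=> Hv Hc i Hi; move: (Hv i Hi).
have Dpi : (nth ([::], RAx) pi i).1 \in map fst pi.
  by rewrite -(nth_map ([::], RAx) [::]) // mem_nth // size_map.
have Ppi : {subset map fst (take i pi) <= map fst pi}.
  by move=> c; rewrite map_take => /mem_take.
move: Dpi; case: (nth ([::], RAx) pi i) => D [|j|j k|s] /= Dpi.
- by rewrite mem_cat => ->.
- by [].
- by [].
- set prev := map fst (take i pi).
  case=> Hsr Hvars Hid; split.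
  + apply: sr_step => //; case: Hc => [Hc|Hc]; [left|by right].
    move=> x Hx; apply: contraNN (Hc x Hx); apply: (@occurs_sub x (D :: G ++ prev)) => c.
    rewrite inE mem_cat => /orP [/eqP ->|/orP [cG|cp]]; rewrite mem_cat ?cG ?Dpi ?orbT //.
    by rewrite (Ppi _ cp) orbT.
  + by move=> x /Hvars; rewrite /occurs has_cat => ->.
  + move=> x Hn; apply: Hid; move: Hn; rewrite /occurs /= !has_cat; apply: contraNN.
    by case/orP => [->|/orP [->|->]]; rewrite ?orbT.
Qed.
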